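(* Let $A\subseteq\Omega$. If there exists a $\mathcal{P}$-e-process $(E_t)_{t\in\mathbb{N}_0}$ with $\sup_{t\in\mathbb{N}_0}E_t=\infty$ at every point of $A$, then there exists a $\mathcal{P}$-e-process $(E'_t)_{t\in\mathbb{N}_0}$ with $\lim_{t\to\infty}E'_t=\infty$ at every point of $A$; consequently $\mu^*(A)=0$.
   Context: Standing setup: $(\Omega, (\mathcal{F}_t)_{t\in\mathbb{N}_0}, \mathcal{F})$ is a filtered measurable space with $\mathcal{F} = \sigma\big(\bigcup_{t} \mathcal{F}_t\big)$. A stopping time is a map $\tau:\Omega\to\mathbb{N}_0\cup\{\infty\}$ with $\{\tau \le t\}\in\mathcal{F}_t$ for all $t$; $\mathcal{T}$ denotes the set of all stopping times. $\mathcal{P}$ is an arbitrary family of probability measures on $\mathcal{F}$. The inverse-capital measure is defined for every $A\subseteq\Omega$ by $\mu^*(A) = \inf_{\tau\in\mathcal{T}:\, A\subseteq\{\tau<\infty\}} \sup_{\mathbb{P}\in\mathcal{P}} \mathbb{P}(\tau<\infty)$. A $\mathcal{P}$-e-process is a nonnegative (possibly $[0,\infty]$-valued) process $(E_t)_{t\in\mathbb{N}_0}$ adapted to $(\mathcal{F}_t)$ such that $\mathbb{E}_{\mathbb{P}}[E_\tau]\le 1$ for every $\mathbb{P}\in\mathcal{P}$ and every $\tau\in\mathcal{T}$, with the convention $E_\infty=\limsup_{t\to\infty}E_t$. *)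

(* Defs.v *)
From HB Require Import structures.
From mathcomp Require Import all_boot all_order all_algebra.
From mathcomp Require Import all_classical all_reals all_analysis measurable_realfun.
Set Implicit Arguments. Unset Strict Implicit. Unset Printing Implicit Defensive.
Import Order.TTheory GRing.Theory Num.Theory.
Local Open Scope classical_set_scope.
Local Open Scope ring_scope.
Local Open Scope ereal_scope.

Section Defs.
Context {d : measure_display} {T : measurableType d} {R : realType}.

Definition filtration (F : nat -> set_system T) : Prop :=
  [/\ (forall t, sigma_algebra setT (F t)),
      (forall s t, (s <= t)%N -> F s `<=` F t) &
      @measurable d T = <<s \bigcup_t F t >> ].

(* Stopping times tau : Omega -> N_0 u {oo}; None encodes oo. *)
Definition stopping_time (F : nat -> set_system T) (tau : T -> option nat) : Prop :=
  forall t, F t [set x | exists2 n, tau x = Some n & (n <= t)%N].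

Definition stopped (E : nat -> T -> \bar R) (tau : T -> option nat) (x : T) : \bar R :=
  match tau x with
  | Some n => E n x
  | None => limn_esup (fun t => E t x)
  end.

Definition adapted (F : nat -> set_system T) (E : nat -> T -> \bar R) : Prop :=
  forall t (B : set (\bar R)), measurable B -> F t (E t @^-1` B).

Definition e_process (F : nat -> set_system T) (PP : set (probability T R))
    (E : nat -> T -> \bar R) : Prop :=
  [/\ (forall t x, 0 <= E t x),
      adapted F E &
      (forall P tau, PP P -> stopping_time F tau ->
         \int[P]_x stopped E tau x <= 1)].

(* sup over PP of P(tau < oo), as a supremum of a family in [0,1]
   (hence 0 when PP is empty). *)
Definition sup_prob (PP : set (probability T R)) (S : set T) : \bar R :=
  ereal_sup ([set 0] `|` [set P S | P in PP]).

Definition mu_star (F : nat -> set_system T) (PP : set (probability T R)) (A : set T) : \bar R :=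
  ereal_inf [set sup_prob PP [set x | tau x <> None] |
               tau in [set tau | stopping_time F tau /\
                                 A `<=` [set x | tau x <> None]]].

End Defs.

(* Main.v *)
Require Import Defs.
From HB Require Import structures.
From mathcomp Require Import all_boot all_order all_algebra.
From mathcomp Require Import all_classical all_reals all_analysis measurable_realfun.
Import Order.TTheory GRing.Theory Num.Theory.
Local Open Scope classical_set_scope.
Local Open Scope ring_scope.
Local Open Scope ereal_scope.
Set Implicit Arguments. Unset Strict Implicit.

Lemma le_int_nm d (T : measurableType d) (R : realType) (mu : {measure set T -> \bar R})
  (f g : T -> \bar R) : (forall x, 0 <= f x) -> (forall x, f x <= g x) ->
  \int[mu]_x f x <= \int[mu]_x g x.
Proof.
move=> f0 fg.
have g0 x : 0 <= g x by exact: le_trans (f0 x) (fg x).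
rewrite !ge0_integralTE //; apply: le_ereal_sup => _ [h hf <-]; exists h => //= x.
exact: le_trans (hf x) (fg x).
Qed.

Lemma limn_esup_le (R : realType) (u : (\bar R)^nat) b :
  (forall n, u n <= b) -> limn_esup u <= b.
Proof.
move=> ub; rewrite /limn_esup limf_esupE; apply: ge_ereal_inf.
exists (ereal_sup (u @` setT)); first by exists setT => //; exact: filterT.
by apply: ge_ereal_sup => _ [n _ <-].
Qed.

Lemma limn_esup_ge0 (R : realType) (u : (\bar R)^nat) :
  (forall n, 0 <= u n) -> 0 <= limn_esup u.
Proof. by move=> u0; apply: limf_esup_ge0 => //; exact: filter_not_empty. Qed.

Section main.
Context d (T : measurableType d) (R : realType) (F : nat -> set_system T)
  (PP : set (probability T R)) (E : nat -> T -> \bar R).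
Hypotheses (HF : filtration F) (HE : e_process F PP E).

Lemma FsA t : sigma_algebra setT (F t).
Proof. by case: HF. Qed.

Lemma Fmeas t A : F t A -> measurable A.
Proof.
case: HF => _ _ ->; move=> FA; apply: sub_sigma_algebra; by exists t.
Qed.

Lemma Fmono s t : (s <= t)%N -> F s `<=` F t.
Proof. by case: HF => _ + _; apply. Qed.

Lemma FtE t : (F t).-sigma.-measurable = F t.
Proof. exact: measurable_g_measurableTypeE (FsA t). Qed.

Lemma toM t A : F t A -> (F t).-sigma.-measurable A.
Proof. by move=> h; apply: sub_sigma_algebra. Qed.

Lemma ofM t A : (F t).-sigma.-measurable A -> F t A.
Proof. by move=> h; rewrite -[F t](sigma_algebra_id (FsA t)). Qed.

Definition reach (a : R) (tau : T -> option nat) x n : Prop :=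
  (if tau x is Some m then (n <= m)%N else True) /\ a%:E <= E n x.

Definition sig (a : R) tau x : option nat :=
  match pselect (exists n, `[< reach a tau x n >]) with
  | left h => Some (ex_minn h)
  | right _ => None
  end.

Lemma sig_some a tau x m : sig a tau x = Some m ->
  reach a tau x m /\ forall n, reach a tau x n -> (m <= n)%N.
Proof.
rewrite /sig; case: pselect => [h|]// [<-]; case: ex_minnP => m' /asboolP r mn.
by split=> // n /asboolP /mn.
Qed.

Lemma sig_none a tau x : sig a tau x = None -> forall n, ~ reach a tau x n.
Proof.
rewrite /sig; case: pselect => [h|nh]// _ n r; apply: nh; exists n; exact/asboolP.
Qed.

Lemma sig_ex a tau x n : reach a tau x n -> exists2 m, sig a tau x = Some m & (m <= n)%N.
Proof.
move=> r; case e: (sig a tau x) => [m|]; last by have := sig_none e r.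
by exists m => //; have [_ ] := sig_some e; apply.
Qed.

Lemma geF a n : F n [set x | a%:E <= E n x].
Proof.
case: HE => _ ad _.
have -> : [set x | a%:E <= E n x] = E n @^-1` [set` Interval (BLeft a%:E) (BInfty _ false)].
  by apply/seteqP; split => x /=; rewrite in_itv /= andbT.
by apply: ad; exact: emeasurable_itv.
Qed.

Lemma tau_geF tau n t : stopping_time F tau -> (n <= t)%N ->
  F t [set x | if tau x is Some m then (n <= m)%N else True].
Proof.
move=> st nt; case: n nt => [|k] kt.
  have -> : [set x | if tau x is Some m then (0 <= m)%N else True] = setT.
    by apply/seteqP; split => x //= _; case: (tau x).
  apply: ofM; exact: measurableT.
have -> : [set x | if tau x is Some m then (k.+1 <= m)%N else True] =
    ~` [set x | exists2 m, tau x = Some m & (m <= k)%N].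
  apply/seteqP; split => x /=.
    case: (tau x) => [m|] //.
      move=> km [m' [<-] mk]; by rewrite ltnNge mk in km.
    by move=> _ [m'].
  case ex: (tau x) => [m|] // h; rewrite ltnNge; apply/negP => mk; apply: h; by exists m.
apply: ofM; apply: measurableC; apply: toM.
apply: (Fmono (ltnW kt)); exact: st.
Qed.

Lemma sig_stopping a tau : stopping_time F tau -> stopping_time F (sig a tau).
Proof.
move=> st t.
have -> : [set x | exists2 n, sig a tau x = Some n & (n <= t)%N] =
  \bigcup_n [set x | (n <= t)%N /\ reach a tau x n].
  apply/seteqP; split => x /=.
    by move=> [n /sig_some [r _] nt]; exists n.
  move=> [n _ [nt r]]; have [m sm mn] := sig_ex r; exists m => //.
  exact: leq_trans mn nt.
suff Hn : forall n, F t [set x | (n <= t)%N /\ reach a tau x n].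
  apply: ofM; apply: bigcupT_measurable => n; exact: toM.
move=> n; apply: ofM.
case/orP: (leqVgt n t) => nt.
  have -> : [set x | (n <= t)%N /\ reach a tau x n] =
     [set x | if tau x is Some m then (n <= m)%N else True] `&` [set x | a%:E <= E n x].
    by apply/seteqP; split => x /=; rewrite nt; [move=> [_ []]|move=> [] ].
  apply: measurableI; apply: toM; first exact: tau_geF.
  exact: (Fmono nt (geF a n)).
have -> : [set x | (n <= t)%N /\ reach a tau x n] = set0.
  by apply/seteqP; split => x //= [] ; rewrite leqNgt nt.
exact: measurable0.
Qed.

Definition Sset a tau := [set x | exists n, reach a tau x n].

Lemma Sset_meas a tau : stopping_time F tau -> measurable (Sset a tau).
Proof.
move=> st.
have -> : Sset a tau = \bigcup_t [set x | exists2 n, sig a tau x = Some n & (n <= t)%N].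
  apply/seteqP; split => x /=.
    by move=> [n /sig_ex [m sm _]]; exists m => //; exists m.
  by move=> [t _ [n /sig_some [r _] _]]; exists n.
apply: bigcupT_measurable => t; apply: Fmeas; exact: sig_stopping.
Qed.

Lemma stopped_ge0 tau x : 0 <= stopped E tau x.
Proof.
case: HE => E0 _ _; rewrite /stopped; case: (tau x) => [n|] //.
exact: limn_esup_ge0.
Qed.

Lemma markov a tau P : (0 < a)%R -> PP P -> stopping_time F tau ->
  a%:E * P (Sset a tau) <= 1.
Proof.
move=> a0 PPP st; case: HE => E0 _ bnd.
apply: le_trans (bnd P (sig a tau) PPP (sig_stopping a st)).
rewrite -[Sset a tau]setIT -integral_indic //; last exact: Sset_meas.
rewrite -ge0_integralZl_EFin //; try exact: ltW.
2: by apply/(measurable_EFinP _ (\1_(Sset a tau) : T -> R)); apply: measurable_indic; exact: Sset_meas.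
apply: le_int_nm.
  by move=> x; rewrite -EFinM lee_fin mulr_ge0 // ltW.
move=> x; rewrite /indic; case: (boolP (x \in Sset a tau)) => xS.
  rewrite inE in xS; case: xS => n /sig_ex [m sm _].
  have [[_ r] _] := sig_some sm.
  by rewrite mule1 /stopped sm.
by rewrite mule0 stopped_ge0.
Qed.


Lemma Sset_pt a tau tau' x : tau x = tau' x -> (x \in Sset a tau) = (x \in Sset a tau').
Proof.
move=> e; apply/idP/idP; rewrite !inE => -[n [h1 h2]]; exists n; split => //.
  by rewrite -e. by rewrite e.
Qed.

Lemma Sset_none a tau tau' x : tau' x = None -> (x \in Sset a tau) -> (x \in Sset a tau').
Proof. by move=> e; rewrite !inE => -[n [h1 h2]]; exists n; split => //; rewrite e. Qed.

Lemma const_stopping t : stopping_time F (fun _ => Some t).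
Proof.
move=> s; apply: ofM.
have [ts|ts] := boolP (t <= s)%N.
  have -> : [set x : T | exists2 n, Some t = Some n & (n <= s)%N] = setT.
    by apply/seteqP; split => x //= _; exists t.
  exact: measurableT.
have -> : [set x : T | exists2 n, Some t = Some n & (n <= s)%N] = set0.
  apply/seteqP; split => x //= -[n [<-] h]; by rewrite h in ts.
exact: measurable0.
Qed.

Lemma none_stopping : stopping_time F (fun _ => None).
Proof.
move=> s; apply: ofM.
have -> : [set x : T | exists2 n, (None : option nat) = Some n & (n <= s)%N] = set0.
  by apply/seteqP; split => x //= -[].
exact: measurable0.
Qed.

Lemma Sset_const_F a t : F t (Sset a (fun _ => Some t)).
Proof.
have -> : Sset a (fun _ => Some t) =
    [set x | exists2 n, sig a (fun _ => Some t) x = Some n & (n <= t)%N].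
  apply/seteqP; split => x /=.
    move=> [n r]; have [m sm mn] := sig_ex r; exists m => //.
    by case: r => /= h _; exact: leq_trans mn h.
  by move=> [n /sig_some [r _] _]; exists n.
exact: (sig_stopping a (const_stopping t)).
Qed.

Lemma sup_big x (b : R) : ereal_sup (range (fun t => E t x)) = +oo ->
  exists n, b%:E <= E n x.
Proof.
move=> sx; apply/not_existsP => h.
have : ereal_sup (range (fun t => E t x)) <= b%:E.
  apply: ge_ereal_sup => _ [n _ <-]; have := h n; rewrite leNgt => /negP.
  by rewrite negbK => /ltW.
by rewrite sx.
Qed.

End main.

Definition thr {R : realType} (k : nat) : R := ((2 ^ k)%:R * (2 ^ k.+1)%:R)%R.

Definition Gser d (T : measurableType d) (R : realType) (E : nat -> T -> \bar R)
  (tau : T -> option nat) (x : T) : \bar R :=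
  \sum_(k <oo) ((2 ^ k)%:R * \1_(Sset E (thr k) tau) x)%:E.


Lemma geo1 (R : realType) : \sum_(k <oo) ((1:R) / (2 ^ (k + 1))%:R)%:E = 1.
Proof.
have := @cvg_geometric_eseries_half R 1 0.
move/cvg_lim => -> //; by rewrite expr0 divr1.
Qed.

Section main2.
Context d (T : measurableType d) (R : realType) (F : nat -> set_system T)
  (PP : set (probability T R)) (E : nat -> T -> \bar R).
Hypotheses (HF : filtration F) (HE : e_process F PP E).

Lemma Gser_ge0 tau x : 0 <= Gser E tau x.
Proof.
by apply: nneseries_ge0 => n _ _; rewrite lee_fin mulr_ge0 // /indic ler0n.
Qed.

Lemma Ep_adapted : adapted F (fun t => Gser E (fun _ => Some t)).
Proof.
move=> t B mB; apply: (ofM HF).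
have mf : measurable_fun (setT : set (g_sigma_algebraType (F t)))
    (fun x => Gser E (fun _ => Some t) x).
  apply: ge0_emeasurable_sum.
    by move=> k x _ _; rewrite lee_fin mulr_ge0 // /indic ler0n.
  move=> k _.
  apply/(@measurable_EFinP _ (g_sigma_algebraType (F t)) R setT
     (fun x : g_sigma_algebraType (F t) => (2 ^ k)%:R * \1_(Sset E (thr k) (fun _ => Some t)) x)%R).
  apply: measurable_funM; first exact: measurable_cst.
  apply: measurable_indic; apply: sub_sigma_algebra; exact: (Sset_const_F HF HE).
by have := mf measurableT B mB; rewrite setTI.
Qed.

Lemma Ep_bound P tau : PP P -> stopping_time F tau ->
  \int[P]_x stopped (fun t => Gser E (fun _ => Some t)) tau x <= 1.
Proof.
move=> PPP st.
have term0 k (S : set T) x : (0 <= ((2 ^ k)%:R * \1_S x : R)%:E).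
  by rewrite lee_fin mulr_ge0 // /indic ler0n.
apply: le_trans (@le_int_nm _ _ _ P _ (Gser E tau) _ _) _.
- move=> x; rewrite /stopped; case: (tau x) => [n|]; first exact: Gser_ge0.
  by apply: limn_esup_ge0 => n; exact: Gser_ge0.
- move=> x; rewrite /stopped; case ex: (tau x) => [n|].
    apply: lee_nneseries => k _ //.
    by rewrite /indic (@Sset_pt _ _ _ E _ (fun _ => Some n) tau x) // ex.
  apply: limn_esup_le => t; apply: lee_nneseries => k _ //.
  rewrite lee_fin ler_wpM2l // /indic.
  case: (boolP (x \in Sset E (thr k) (fun _ => Some t))) => h.
    by rewrite (Sset_none ex h).
  by rewrite ler0n.
rewrite /Gser integral_nneseries //; last first.
  move=> k.
  apply/(measurable_EFinP _ (fun x => (2 ^ k)%:R * \1_(Sset E (thr k) tau) x)%R).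
  apply: measurable_funM; first exact: measurable_cst.
  apply: measurable_indic; exact: (Sset_meas HF HE).
rewrite -(geo1 R); apply: lee_nneseries => k _.
  by move=> _; apply: integral_ge0 => x _.
under eq_integral do rewrite EFinM.
rewrite ge0_integralZl //; last first.
  apply/(measurable_EFinP _ (\1_(Sset E (thr k) tau) : T -> R)).
  apply: measurable_indic; exact: (Sset_meas HF HE).
rewrite integral_indic //; last exact: (Sset_meas HF HE).
rewrite setIT.
have thr0 : (0 < thr k :> R)%R by rewrite /thr mulr_gt0 // ltr0n expn_gt0.
have hm := markov HF HE thr0 PPP st.
have hP : P (Sset E (thr k) tau) <= (thr k)^-1%:E.
  by rewrite -[X in _ <= X]mule1 lee_pdivlMl.
apply: le_trans (lee_wpmul2l _ hP) _; first by rewrite lee_fin.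
by rewrite -EFinM lee_fin /thr invfM mulrA divff ?mul1r ?div1r ?addn1 // pnatr_eq0 expn_eq0.
Qed.

End main2.

Section main3.
Context d (T : measurableType d) (R : realType) (F : nat -> set_system T)
  (PP : set (probability T R)) (E : nat -> T -> \bar R).
Hypotheses (HF : filtration F) (HE : e_process F PP E).

Lemma Ep_cvg x : ereal_sup (range (fun t => E t x)) = +oo ->
  (fun t => Gser E (fun _ => Some t) x) @ \oo --> +oo.
Proof.
move=> sx; apply/cvgeyPge => M.
have [k Mk] : exists k, (M <= (2 ^ k)%:R)%R.
  exists (Num.Def.trunc M).+1; apply: le_trans (ltW (truncnS_gt M)) _.
  by rewrite ler_nat ltnW // ltn_expl.
have [n hn] := @sup_big _ _ _ E x (thr k) sx.
exists n => // t /= nt.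
apply: le_trans (_ : ((2 ^ k)%:R)%:E <= _); first by rewrite lee_fin.
rewrite /Gser; apply: le_trans (nneseries_lim_ge k.+1 _); last first.
  by move=> i _ _; rewrite lee_fin mulr_ge0 // /indic ler0n.
rewrite big_nat_recr //=; apply: lee_paddl.
  by apply: sume_ge0 => i _; rewrite lee_fin mulr_ge0 // /indic ler0n.
have hS : x \in Sset E (thr k) (fun _ => Some t) by rewrite inE; exists n.
by rewrite /indic hS mulr1.
Qed.

Lemma mu0 (A : set T) : (forall x, A x -> ereal_sup (range (fun t => E t x)) = +oo) ->
  mu_star F PP A = 0.
Proof.
move=> hA; apply/eqP; rewrite eq_le; apply/andP; split; last first.
  apply: le_ereal_inf_tmp => _ [tau _ <-]; apply: ereal_sup_ubound; by left.
apply/lee_addgt0Pr => e e0; rewrite add0e.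
have ie0 : (0 < e^-1)%R by rewrite invr_gt0.
apply: ge_ereal_inf.
exists (sup_prob PP [set x | sig E e^-1 (fun _ => None) x <> None]).
  exists (sig E e^-1 (fun _ => None)) => //; split.
    exact: (sig_stopping HF HE _ (none_stopping HF)).
  move=> x Ax; have [n hn] := @sup_big _ _ _ E x e^-1 (hA x Ax).
  have r : reach E e^-1 (fun _ => None) x n by split.
  by have [m sm _] := sig_ex r; rewrite /= sm.
apply: ge_ereal_sup => _ [-> | [P PPP <-]]; first by rewrite lee_fin ltW.
have -> : [set x | sig E e^-1 (fun _ => None) x <> None] = Sset E e^-1 (fun _ => None).
  apply/seteqP; split => x /=.
    case ex: (sig E e^-1 (fun _ => None) x) => [m|] // _.
    by have [r _] := sig_some ex; exists m.
  by move=> [n r]; have [m -> _] := sig_ex r.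
have h := markov HF HE ie0 PPP (none_stopping HF).
rewrite -[X in _ <= X%:E]invrK.
by rewrite -[X in _ <= X]mule1 lee_pdivlMl.
Qed.

End main3.

Unset Implicit Arguments. Set Strict Implicit.

Theorem mainTheorem11 (d : measure_display) (T : measurableType d) (R : realType)
    (F : nat -> set_system T) (PP : set (probability T R)) (A : set T) :
  filtration F ->
  (exists E : nat -> T -> \bar R, e_process F PP E /\
     (forall x, A x -> ereal_sup (range (fun t => E t x)) = +oo)) ->
  (exists E' : nat -> T -> \bar R, e_process F PP E' /\
     (forall x, A x -> (fun t => E' t x) @ \oo --> +oo)) /\
  mu_star F PP A = 0.
Proof.
move=> HF [E [HE hA]]; split; last exact: (mu0 HF HE hA).
exists (fun t => Gser E (fun _ => Some t)); split; last first.
  by move=> x Ax; apply: Ep_cvg; exact: hA.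
split.
- by move=> t x; exact: Gser_ge0.
- exact: (Ep_adapted HF HE).
- by move=> P tau PPP st; exact: (Ep_bound HF HE PPP st).
Qed.
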